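(* Let $G$ be a sub-$2$-permutable graph and let $H$ be a $2$-adjustable graph. Then $\chi_i(G\,\square\,H)\le \Delta(G\,\square\,H)+2$.
   Context: All graphs are finite and simple. $K^-_{2n}$ is the complete graph on $2n$ vertices with a perfect matching removed. A homomorphism $f:G\to H$ is a map $V(G)\to V(H)$ with $f(u)f(v)\in E(H)$ whenever $uv\in E(G)$; it is locally injective if for every vertex $v$, $f$ is injective on $N(v)$. A graph $G$ is sub-$2$-permutable if it admits a locally injective homomorphism to $K^-_{\Delta(G)+2}$. An incidence of $G$ is a pair $(v,e)$ with $v\in e\in E(G)$; incidences $(v,e),(u,f)$ are adjacent if $v=u$, or $e=f$, or $vu\in\{e,f\}$; an incidence coloring gives adjacent incidences distinct colors; $\chi_i(G)$ is the least number of colors of an incidence coloring. $S^0_c(v)=\{c(v,uv):uv\in E(G)\}$. An incidence coloring $c$ with palette $P$ is adjustable if there are two distinct colors $x,y\in P$ such that no vertex $v$ has $\{x,y\}\subseteq S^0_c(v)$; $H$ is $2$-adjustable if it admits an adjustable incidence coloring with a palette of size $\Delta(H)+2$. $\Delta$ denotes maximum degree. $G\,\square\,H$ is the Cartesian product: vertex set $V(G)\times V(H)$, $(u,v)\sim(u',v')$ iff ($uu'\in E(G)$, $v=v'$) or ($u=u'$, $vv'\in E(H)$). *)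

(* Defs.v *)
From mathcomp Require Import all_boot.
Set Implicit Arguments. Unset Strict Implicit. Unset Printing Implicit Defensive.

(* A finite simple graph: vertex type T : finType, adjacency e : rel T that is
   symmetric and irreflexive (hypotheses stated in the theorem). *)

Definition deg (T : finType) (e : rel T) (v : T) : nat := #|[set u | e v u]|.
Definition maxdeg (T : finType) (e : rel T) : nat := \max_(v : T) deg e v.

Definition boxprod (T U : finType) (eG : rel T) (eH : rel U) : rel (T * U) :=
  fun p q => (eG p.1 q.1 && (p.2 == q.2)) || ((p.1 == q.1) && eH p.2 q.2).

(* K^-_{2n}: vertices 'I_(2n), matching {2k, 2k+1} removed *)
Definition Kminus_adj (n : nat) : rel 'I_(2 * n) :=
  fun i j => (i != j) && (i./2 != j./2).

Definition hom (T : finType) (e : rel T) (m : nat) (eK : rel 'I_m) (f : T -> 'I_m) :=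
  forall u v, e u v -> eK (f u) (f v).

Definition locally_injective (T : finType) (e : rel T) (m : nat) (f : T -> 'I_m) :=
  forall v u w, e v u -> e v w -> f u = f w -> u = w.

(* sub-2-permutable: locally injective homomorphism to K^-_{Delta+2};
   K^-_{Delta+2} exists only when Delta+2 = 2n is even. *)
Definition sub2permutable (T : finType) (e : rel T) : Prop :=
  exists n : nat, 2 * n = maxdeg e + 2 /\
    exists f : T -> 'I_(2 * n), hom e (@Kminus_adj n) f /\ locally_injective e f.

(* Incidences: the pair (v,u) with e v u stands for the incidence (v, vu). *)
Definition same_edge (T : eqType) (a b c d : T) : bool :=
  ((a == c) && (b == d)) || ((a == d) && (b == c)).

Definition inc_adj (T : eqType) (v u w x : T) : bool :=
  [|| v == w, same_edge v u w x, same_edge v w v u | same_edge v w w x].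

Definition inc_coloring (T : finType) (e : rel T) (k : nat)
    (c : {ffun T * T -> 'I_k}) : bool :=
  [forall v : T, forall u : T, forall w : T, forall x : T,
     [&& e v u, e w x, (v, u) != (w, x) & inc_adj v u w x] ==>
       (c (v, u) != c (w, x))].

Definition inc_colorable (T : finType) (e : rel T) (k : nat) : bool :=
  [exists c : {ffun T * T -> 'I_k}, inc_coloring e c].

Lemma inc_colorable_exists (T : finType) (e : rel T) :
  exists k, inc_colorable e k.
Proof.
exists #|{: T * T}|; apply/existsP.
exists [ffun p => enum_rank p].
apply/forallP => v; apply/forallP => u; apply/forallP => w; apply/forallP => x.
apply/implyP => /and4P [_ _ Hne _]; rewrite !ffunE.
apply: contra Hne => /eqP H; apply/eqP; exact: enum_rank_inj H.
Qed.

Definition inc_chrom (T : finType) (e : rel T) : nat :=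
  ex_minn (inc_colorable_exists e).

Definition S0 (T : finType) (e : rel T) (k : nat) (c : {ffun T * T -> 'I_k}) (v : T)
  : {set 'I_k} := [set c (v, u) | u in [set u | e v u]].

Definition adjustable (T : finType) (e : rel T) (k : nat) (c : {ffun T * T -> 'I_k}) :=
  exists x y : 'I_k, x != y /\ forall v : T, ~~ ((x \in S0 e c v) && (y \in S0 e c v)).

Definition two_adjustable (T : finType) (e : rel T) : Prop :=
  exists c : {ffun T * T -> 'I_(maxdeg e + 2)}, inc_coloring e c /\ adjustable e c.

(* Main.v *)
Require Import Defs.
From mathcomp Require Import all_boot zify.
Set Implicit Arguments. Unset Strict Implicit. Unset Printing Implicit Defensive.

Definition pr (i : nat) : nat := (~~ odd i) + (i./2).*2.

Lemma pr_half i : (pr i)./2 = i./2.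
Proof. by rewrite /pr half_bit_double. Qed.

Lemma pr_odd i : odd (pr i) = ~~ odd i.
Proof. by rewrite /pr oddD odd_double addbF; case: (odd i). Qed.

Lemma pr_neq i : pr i <> i.
Proof. move=> H; have := pr_odd i; rewrite H; by case: (odd i). Qed.

Lemma pr_inj i j : pr i = pr j -> i = j.
Proof.
move=> H; rewrite -(odd_double_half i) -(odd_double_half j).
have h1 := pr_half i; have h2 := pr_half j; have o1 := pr_odd i; have o2 := pr_odd j.
rewrite H in h1 o1. rewrite -h1 h2; congr (_ + _).
by move: o1; rewrite o2; case: (odd i); case: (odd j).
Qed.

Lemma pr_lt n i : i < 2 * n -> pr i < 2 * n.
Proof.
move=> H; rewrite /pr. have E := odd_double_half i.
case: (odd i) E => /= E; rewrite -!muln2 in E *; lia.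
Qed.

Definition code (m : nat) (x y : 'I_m) (N a : nat) (z : 'I_m) : nat :=
  if z == x then pr a else if z == y then a else N + (z - (x < z) - (y < z)).

Lemma code_inj m (x y : 'I_m) n a z1 z2 : x != y -> a < 2 * n ->
  code x y (2 * n) a z1 = code x y (2 * n) a z2 -> z1 = z2.
Proof.
move=> Hxy Ha; have Hp := pr_lt Ha; have Hpa := @pr_neq a.
rewrite /code; case E1: (z1 == x); case E2: (z2 == x); case E3: (z1 == y);
  case E4: (z2 == y); move: E1 E2 E3 E4; rewrite -!val_eqE /=;
  case: (ltnP x z1); case: (ltnP x z2); case: (ltnP y z1); case: (ltnP y z2) => /=;
  move: Hxy; rewrite -val_eqE /= => Hxy *; apply/val_inj => /=; lia.
Qed.

Lemma code_lt m (x y : 'I_(m + 2)) n a z : x != y -> a < 2 * n ->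
  code x y (2 * n) a z < 2 * n + m.
Proof.
move=> Hxy Ha; have Hp := pr_lt Ha; rewrite /code.
have hz := ltn_ord z; have hx := ltn_ord x; have hy := ltn_ord y.
case E1: (z == x); case E3: (z == y); move: E1 E3; rewrite -!val_eqE /=;
  case: (ltnP x z); case: (ltnP y z) => /=;
  move: Hxy; rewrite -val_eqE /= => Hxy *; lia.
Qed.

Lemma code_half m (x y : 'I_m) n a z : a < 2 * n ->
  code x y (2 * n) a z < 2 * n -> (code x y (2 * n) a z)./2 = a./2.
Proof.
rewrite /code; case: eqP => _; first by rewrite pr_half.
case: eqP => _ //; lia.
Qed.

Lemma colorable_of (T : finType) (e : rel T) (K : nat) (col : T -> T -> nat) :
  (forall v u, e v u -> col v u < K.+1) ->
  (forall v u w x, e v u -> e w x -> (v, u) != (w, x) -> inc_adj v u w x ->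
     col v u != col w x) ->
  inc_colorable e K.+1.
Proof.
move=> Hb Hd; apply/existsP; exists [ffun p => inord (col p.1 p.2)].
apply/forallP=> v; apply/forallP=> u; apply/forallP=> w; apply/forallP=> x.
apply/implyP => /and4P [H1 H2 H3 H4]; rewrite !ffunE /=.
apply: contra (Hd _ _ _ _ H1 H2 H3 H4) => /eqP E.
by move: (congr1 val E); rewrite /= !inordK ?Hb // => ->.
Qed.

Lemma chrom_le (T : finType) (e : rel T) K : inc_colorable e K -> inc_chrom e <= K.
Proof. by rewrite /inc_chrom; case: ex_minnP => m _ Hmin; apply: Hmin. Qed.

Lemma maxdeg_arg (T : finType) (e : rel T) (t : T) : exists g, maxdeg e = deg e g.
Proof.
have [g _ Hg] := @arg_maxnP T t predT (deg e) isT.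
exists g; apply/eqP; rewrite eqn_leq; apply/andP; split.
  by apply/bigmax_leqP => j _; apply: Hg.
exact: leq_bigmax.
Qed.

Lemma maxdeg_prod (T U : finType) (eG : rel T) (eH : rel U) (irrG : irreflexive eG)
  (p : T * U) : maxdeg eG + maxdeg eH <= maxdeg (boxprod eG eH).
Proof.
have [g0 ->] := maxdeg_arg eG p.1; have [h0 ->] := maxdeg_arg eH p.2.
rewrite /maxdeg; apply: (leq_trans _ (@leq_bigmax _ (deg (boxprod eG eH)) (g0, h0))).
rewrite /deg.
set A := [set (g, h0) | g in [set g | eG g0 g]].
set B := [set (g0, h) | h in [set h | eH h0 h]].
have cA : #|A| = #|[set g | eG g0 g]| by apply: card_imset => a b [].
have cB : #|B| = #|[set h | eH h0 h]| by apply: card_imset => a b [].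
have AB : A :&: B = set0.
  apply/setP => q; rewrite !inE; apply/negP => /andP [/imsetP [g Hg ->] /imsetP [h _ [E _]]].
  by move: Hg; rewrite inE E irrG.
have cU : #|A :|: B| = #|A| + #|B| by rewrite cardsU AB cards0 subn0.
rewrite -cA -cB -cU.
apply: subset_leq_card; apply/subsetP => q; rewrite !inE.
case/orP => /imsetP [z]; rewrite inE => Hz ->; rewrite /boxprod /= ?eqxx ?Hz //.
by rewrite orbT.
Qed.

Theorem mainTheorem12 (T U : finType) (eG : rel T) (eH : rel U)
  (symG : symmetric eG) (irrG : irreflexive eG)
  (symH : symmetric eH) (irrH : irreflexive eH) :
  sub2permutable eG -> two_adjustable eH ->
  inc_chrom (boxprod eG eH) <= maxdeg (boxprod eG eH) + 2.
Proof.
move=> [n [Hn [f [Hhom Hli]]]] [c [Hc [x [y [Hxy Hadj]]]]].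
have fN : forall t, f t < 2 * n by move=> t; exact: ltn_ord.
have cc : forall h1 h2 h3 h4, eH h1 h2 -> eH h3 h4 -> (h1, h2) != (h3, h4) ->
    inc_adj h1 h2 h3 h4 -> c (h1, h2) != c (h3, h4).
  move=> h1 h2 h3 h4 e1 e2 ne ia.
  move/forallP: Hc => /(_ h1) /forallP /(_ h2) /forallP /(_ h3) /forallP /(_ h4) /implyP.
  by apply; rewrite e1 e2 ne ia.
have inS0 : forall h h2, eH h h2 -> c (h, h2) \in S0 eH c h.
  by move=> h h2 e; apply/imsetP; exists h2; rewrite ?inE.
pose F (h : U) (g2 : T) : nat := if y \in S0 eH c h then pr (f g2) else f g2.
pose col (p q : T * U) : nat :=
  if p.2 == q.2 then F p.2 q.1 else code x y (2 * n) (f p.1) (c (p.2, q.2)).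
have Flt : forall h g2, F h g2 < 2 * n.
  by move=> h g2; rewrite /F; case: ifP => _ //; apply: pr_lt.
have Fhalf : forall h g2, (F h g2)./2 = (f g2)./2.
  by move=> h g2; rewrite /F; case: ifP => _ //; rewrite pr_half.
have Finj : forall h g2 g3, F h g2 = F h g3 -> f g2 = f g3 :> nat.
  by move=> h g2 g3; rewrite /F; case: ifP => _ // /pr_inj.
have hom1 : forall g g2, eG g g2 -> (f g : nat) != f g2.
  by move=> g g2 /Hhom /andP [].
have hom2 : forall g g2, eG g g2 -> (f g : nat)./2 != (f g2)./2.
  by move=> g g2 /Hhom /andP [].
have mixed : forall g g2 h z, eG g g2 -> F h g2 != code x y (2 * n) (f g) z.
  move=> g g2 h z e; apply/eqP => E.
  have := @code_half _ x y n (f g) z (fN g); rewrite -E => /(_ (Flt _ _)).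
  rewrite Fhalf => E2; move: (hom2 _ _ e); by rewrite E2 eqxx.
have cinj : forall g z1 z2, code x y (2 * n) (f g) z1 = code x y (2 * n) (f g) z2 -> z1 = z2.
  by move=> g z1 z2; apply: code_inj.
have edge : forall p q, boxprod eG eH p q ->
    (eG p.1 q.1 /\ p.2 = q.2) \/ (p.1 = q.1 /\ eH p.2 q.2 /\ p.2 != q.2).
  move=> [g h] [g2 h2]; rewrite /boxprod /= => /orP [/andP [e /eqP ->]|/andP [/eqP -> e]].
    by left.
  right; split=> //; split=> //; by apply: contraTneq e => ->; rewrite irrH.
have irrP : forall p, boxprod eG eH p p = false.
  by move=> [g h]; rewrite /boxprod /= irrG irrH andbF.
have same : forall p q r, boxprod eG eH p q -> boxprod eG eH p r -> q != r ->
    col p q != col p r.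
  move=> [g h] [g2 h2] [g3 h3] /edge [[/= e1 <-]|[/= <- [e1 n1]]]
    /edge [[/= e2 <-]|[/= <- [e2 n2]]] ne; rewrite /col /= ?eqxx ?(negbTE n1) ?(negbTE n2).
  - apply/eqP => /Finj E; move: ne; rewrite (Hli _ _ _ e1 e2 (val_inj E)) eqxx //.
  - exact: mixed.
  - by rewrite eq_sym; apply: mixed.
  - apply/eqP => /cinj E; move: (cc _ _ _ _ e1 e2).
    rewrite E eqxx; have ne' : (h, h2) != (h, h3).
      by apply: contra ne => /eqP [->].
    by rewrite ne' /inc_adj eqxx => /(_ isT isT).
have cons : forall p q r, boxprod eG eH p q -> boxprod eG eH q r -> col p q != col q r.
  move=> [g h] [g2 h2] [g3 h3] /edge [[/= e1 <-]|[/= <- [e1 n1]]]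
    /edge [[/= e2 <-]|[/= <- [e2 n2]]]; rewrite /col /= ?eqxx ?(negbTE n1) ?(negbTE n2).
  - apply/eqP => /Finj E; move: (hom1 _ _ e2); by rewrite E eqxx.
  - rewrite /code; have Hs := inS0 _ _ e2.
    have [Ex|nx] := eqVneq (c (h, h3)) x.
      have Hy : (y \in S0 eH c h) = false.
        by apply/negbTE; move: (Hadj h); rewrite -Ex Hs.
      rewrite /F Hy; apply/eqP => E; exact: (@pr_neq (f g2) (esym E)).
    idtac.
    have [Ey|ny] := eqVneq (c (h, h3)) y.
      have Hy : y \in S0 eH c h by rewrite -Ey.
      rewrite /F Hy; apply/eqP; exact: pr_neq.
    apply/eqP => E; move: (Flt h g2); rewrite E; lia.
  - by rewrite eq_sym; apply: mixed.
  - apply/eqP => /cinj E; move: (cc _ _ _ _ e1 e2).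
    rewrite E eqxx; have ne' : (h, h2) != (h2, h3).
      by apply/eqP => -[E1 _]; move: n1; rewrite E1 eqxx.
    by rewrite ne' /inc_adj /same_edge !eqxx !orbT => /(_ isT isT).
have maxb : forall p : T * U, 2 * n + maxdeg eH <= (maxdeg (boxprod eG eH) + 1).+1.
  move=> p; have := @maxdeg_prod _ _ eG eH irrG p; rewrite Hn; lia.
apply: chrom_le.
have -> : maxdeg (boxprod eG eH) + 2 = (maxdeg (boxprod eG eH) + 1).+1 by rewrite addn1 addn2.
apply: (@colorable_of _ _ _ col).
  move=> v u e; apply: leq_trans (maxb v); rewrite /col.
  case: ifP => _; first by have := Flt v.2 u.1; lia.
  by apply: code_lt.
move=> v u w x' e1 e2 ne; rewrite /inc_adj /same_edge.
case/or4P.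
- move/eqP => E; subst w; apply: same => //; by apply: contra ne => /eqP ->.
- case/orP => /andP [/eqP E1 /eqP E2]; subst.
    by rewrite eqxx in ne.
  exact: cons.
- case/orP => /andP [/eqP E1 /eqP E2]; subst.
    exact: cons.
  by rewrite irrP in e1.
- case/orP => /andP [/eqP E1 /eqP E2]; subst.
    apply: same => //; by apply: contra ne => /eqP ->.
  by rewrite eq_sym; apply: cons.
Qed.
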